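(* Consider the P-SSD algorithm described in the context, executed over a constant (time-invariant) digraph $G$. Let $P$ be a directed path of length $l$ in $G$ from node $j$ to node $i$. Then for each iteration $k\in\mathbb{N}$ and all $q\ge k+l$, $$\mathcal{R}(C_q^i)\subseteq\mathcal{R}(C_k^j)\qquad\text{and}\qquad \mathcal{R}(D(X_j)C_q^i)=\mathcal{R}(D(Y_j)C_q^i).$$
   Context: Data setting: a map $T:\mathcal{M}\to\mathcal{M}$, $\mathcal{M}\subseteq\mathbb{R}^n$; a dictionary $D(x)=[d_1(x),\dots,d_{N_d}(x)]$ of real-valued functions on $\mathcal{M}$; data matrices $X,Y\in\mathbb{R}^{N\times n}$ whose $i$-th rows $x_i^T,y_i^T$ satisfy $y_i=T(x_i)$; $D(X)\in\mathbb{R}^{N\times N_d}$ is the matrix with rows $D(x_1),\dots,D(x_N)$ (similarly $D(Y)$). Assumption: $D(X)$ and $D(Y)$ have full column rank. There are $M$ agents; agent $i$ holds local dictionary snapshots $D(X_i),D(Y_i)$ (obtained from a subset of the snapshot pairs) such that the union over $i$ of the rows of $[D(X_i),D(Y_i)]$ equals the set of rows of $[D(X),D(Y)]$. There are signature matrices $D(X_s),D(Y_s)$ with full column rank such that the rows of $[D(X_s),D(Y_s)]$ are contained in the rows of $[D(X_i),D(Y_i)]$ for every $i$. SSD algorithm: given $A,B\in\mathbb{R}^{m\times q}$, set $A_1=A$, $B_1=B$, $C=I_q$, and iterate: let $[Z^A_j;Z^B_j]$ be a matrix whose columns form a basis of the null space of $[A_j,B_j]$ (with $Z^A_j$ having as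 many rows as $A_j$ has columns); if the null space is trivial return $0$; if the number of rows of $Z^A_j$ is at most its number of columns, return $C$; otherwise set $C\leftarrow CZ^A_j$, $A_{j+1}=A_jZ^A_j$, $B_{j+1}=B_jZ^A_j$. Its output is denoted $\mathrm{SSD}(A,B)$. P-SSD algorithm: at iteration $k\ge1$ the digraph $G_k$ is used; an edge $(j,i)\in E_k$ means $j$ is an in-neighbor of $i$, and $\mathcal{N}_{\mathrm{in}}^k(i)$ denotes the in-neighbors of $i$ in $G_k$. Each agent $i$ sets $C_0^i=I_{N_d}$, $\mathrm{flag}_0^i=0$, and for $k=1,2,\dots$: receives $C_{k-1}^j$ for $j\in\mathcal{N}_{\mathrm{in}}^k(i)$; sets $D_k^i=\mathrm{basis}\big(\bigcap_{j\in\{i\}\cup\mathcal{N}_{\mathrm{in}}^k(i)}\mathcal{R}(C_{k-1}^j)\big)$; sets $E_k^i=\mathrm{SSD}(D(X_i)D_k^i,D(Y_i)D_k^i)$; if the number of columns of $D_k^iE_k^i$ is strictly less than that of $C_{k-1}^i$, sets $C_k^i=D_k^iE_k^i$ and $\mathrm{flag}_k^i=0$; otherwise sets $C_k^i=C_{k-1}^i$ and $\mathrm{flag}_k^i=1$; then transmits $C_k^i$ to its out-neighbors. Here $\mathrm{basis}(\mathcal{A})$ returns a matrix whose columns form a basis of the subspace $\mathcal{A}$, and returns $0$ if $\mathcal{A}=\{0\}$; the matrix $0$ is regarded as having $0$ columns. $\mathcal{R}(\cdot)$ denotes range space. A directed path of length $l$ from $j$ to $i$ is a sequence of $l+1$ nodes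 starting at $j$ and ending at $i$ in which each consecutive ordered pair is an edge. *)

(* Defs.v *)
From HB Require Import structures.
From mathcomp Require Import all_boot all_order all_algebra.
From mathcomp Require Import reals.
Set Implicit Arguments. Unset Strict Implicit. Unset Printing Implicit Defensive.
Import GRing.Theory.
Local Open Scope ring_scope.

Definition range_le (R : fieldType) m n1 n2 (A : 'M[R]_(m, n1)) (B : 'M[R]_(m, n2)) : bool :=
  (A^T <= B^T)%MS.
Definition range_eq (R : fieldType) m n1 n2 (A : 'M[R]_(m, n1)) (B : 'M[R]_(m, n2)) : bool :=
  (A^T == B^T)%MS.

Definition null_basis (R : fieldType) m k r (Mx : 'M[R]_(m, k)) (Z : 'M[R]_(k, r)) : Prop :=
  [/\ Mx *m Z = 0, \rank Z = r & forall v : 'cV[R]_k, Mx *m v = 0 -> range_le v Z].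

(* Runs of the SSD loop from state (A_j, B_j, C); the last index is the output.
   Every choice of null-space bases is allowed (relational semantics). *)
Inductive ssd_iter (R : fieldType) (q m : nat) :
  forall p, 'M[R]_(m, p) -> 'M[R]_(m, p) -> 'M[R]_(q, p) -> forall c, 'M[R]_(q, c) -> Prop :=
| SSD_trivial p (A B : 'M[R]_(m, p)) (C : 'M[R]_(q, p)) (Z : 'M[R]_(p + p, 0)) :
    null_basis (row_mx A B) Z -> @ssd_iter R q m p A B C 0 0
| SSD_stop p (A B : 'M[R]_(m, p)) (C : 'M[R]_(q, p)) r (Z : 'M[R]_(p + p, r)) :
    null_basis (row_mx A B) Z -> (0 < r)%N -> (p <= r)%N -> @ssd_iter R q m p A B C p C
| SSD_step p (A B : 'M[R]_(m, p)) (C : 'M[R]_(q, p)) r (Z : 'M[R]_(p + p, r)) c (C' : 'M[R]_(q, c)) :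
    null_basis (row_mx A B) Z -> (0 < r)%N -> (r < p)%N ->
    @ssd_iter R q m r (A *m usubmx Z) (B *m usubmx Z) (C *m usubmx Z) c C' ->
    @ssd_iter R q m p A B C c C'.

Definition SSD_rel (R : fieldType) m q (A B : 'M[R]_(m, q)) c (E : 'M[R]_(q, c)) : Prop :=
  @ssd_iter R q m q A B 1%:M c E.

Definition inter_basis (R : fieldType) (I : Type) Nd (S : I -> bool)
  (Cs : I -> {c : nat & 'M[R]_(Nd, c)}) d (Dm : 'M[R]_(Nd, d)) : Prop :=
  [/\ \rank Dm = d,
      (forall j, S j -> range_le Dm (projT2 (Cs j))) &
      (forall v : 'cV[R]_Nd, (forall j, S j -> range_le v (projT2 (Cs j))) -> range_le v Dm)].

(* C is an execution of P-SSD over the constant digraph E (E j i : edge (j,i),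
   j in-neighbour of i); C k i is C_k^i. *)
Definition pssd_exec (R : fieldType) (Mag Nd : nat) (E : rel 'I_Mag) (Nloc : 'I_Mag -> nat)
  (DXl DYl : forall i : 'I_Mag, 'M[R]_(Nloc i, Nd))
  (C : nat -> 'I_Mag -> {c : nat & 'M[R]_(Nd, c)}) : Prop :=
  (forall i, C 0%N i = existT _ Nd 1%:M) /\
  (forall (k : nat) (i : 'I_Mag), exists d (Dk : 'M[R]_(Nd, d)) e (Ek : 'M[R]_(d, e)),
     [/\ inter_basis (fun j => (j == i) || E j i) (C k) Dk,
         SSD_rel (DXl i *m Dk) (DYl i *m Dk) Ek &
         C k.+1 i = if (e < projT1 (C k i))%N then existT _ e (Dk *m Ek) else C k i]).

Definition dict_mat (R : fieldType) n N Nd (D : 'rV[R]_n -> 'rV[R]_Nd) (X : 'M[R]_(N, n))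
  : 'M[R]_(N, Nd) := \matrix_(r < N) D (row r X).

(* Main.v *)
Require Import Defs.
From HB Require Import structures.
From mathcomp Require Import all_boot all_order all_algebra.
From mathcomp Require Import reals.
From mathcomp Require Import zify.
Import GRing.Theory.
Local Open Scope ring_scope.

Lemma fc_rank (F : fieldType) m n c (A : 'M[F]_(m,n)) (M : 'M_(n,c)) :
  row_free A^T -> \rank (A *m M) = \rank M.
Proof. by move=> h; rewrite -mxrank_tr trmx_mul mxrankMfree // mxrank_tr. Qed.

Lemma fc_mul (F : fieldType) m n c (A : 'M[F]_(m,n)) (M : 'M_(n,c)) :
  row_free A^T -> row_free M^T -> row_free (A *m M)^T.
Proof.
by move=> hA hM; rewrite /row_free mxrank_tr fc_rank // -mxrank_tr.
Qed.

Lemma fc_inj (F : fieldType) m n c (A : 'M[F]_(m,n)) (M1 M2 : 'M_(n,c)) :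
  row_free A^T -> A *m M1 = A *m M2 -> M1 = M2.
Proof.
move=> hA h; apply: trmx_inj; apply: (row_free_inj hA) => /=.
by rewrite -!trmx_mul h.
Qed.

Lemma ssd_ok (F : fieldType) q m p (A B : 'M[F]_(m,p)) (Cm : 'M_(q,p)) c (C' : 'M_(q,c)) :
  ssd_iter A B Cm C' -> forall A0 B0 : 'M_(m,q), row_free A0^T -> row_free B0^T ->
  A = A0 *m Cm -> B = B0 *m Cm -> row_free Cm^T ->
  row_free C'^T /\ range_eq (A0 *m C') (B0 *m C').
Proof.
elim => {p A B Cm c C'}.
- move=> p A B Cm Z _ A0 B0 _ _ _ _ _; split.
    by rewrite /row_free -leqn0 rank_leq_row.
  by rewrite /range_eq !mulmx0 !submx_refl.
- move=> p A B Cm r Z [hZ hrk _] r0 hpr A0 B0 hA0 hB0 hA hB hC; split => //.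
  have rA : \rank A = p by rewrite hA fc_rank // -mxrank_tr (eqP hC).
  have rB : \rank B = p by rewrite hB fc_rank // -mxrank_tr (eqP hC).
  have hk : (Z^T <= kermx (row_mx A B)^T)%MS.
    by apply/sub_kermxP; rewrite -trmx_mul hZ trmx0.
  have := mxrankS hk; rewrite mxrank_ker mxrank_tr hrk mxrank_tr => hr.
  have hM : (\rank (row_mx A B) <= p)%N.
    move: hr hpr (rank_leq_col (row_mx A B)); move: (\rank (row_mx A B)) => x; lia.
  have sA : (A^T <= (row_mx A B)^T)%MS by rewrite tr_row_mx -addsmxE addsmxSl.
  have sB : (B^T <= (row_mx A B)^T)%MS by rewrite tr_row_mx -addsmxE addsmxSr.
  have eA : (A^T == (row_mx A B)^T)%MS.
    by rewrite -(geq_leqif (mxrank_leqif_eq sA)) !mxrank_tr rA.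
  have eB : (B^T == (row_mx A B)^T)%MS.
    by rewrite -(geq_leqif (mxrank_leqif_eq sB)) !mxrank_tr rB.
  rewrite /range_eq -hA -hB.
  apply/eqmxP; apply: eqmx_trans (eqmxP eA) _; apply: eqmx_sym; exact/eqmxP.
- move=> p A B Cm r Z c C' [hZ hrk _] r0 hrp _ IH A0 B0 hA0 hB0 hA hB hC.
  apply: IH => //; rewrite ?hA ?hB ?mulmxA //.
  apply: fc_mul => //.
  have hBf : row_free B^T by rewrite hB fc_mul.
  have [G hG] := row_freeP hBf.
  move: hZ hrk; rewrite -[Z]vsubmxK mul_row_col.
  set Zu := usubmx Z; set Zd := dsubmx Z => hZ hrk.
  have e1 : Zd^T *m B^T = - (Zu^T *m A^T).
    by rewrite -!trmx_mul -linearN /=; congr (_^T); apply/eqP; rewrite -addr_eq0 addrC hZ.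
  have e2 : Zd^T = Zu^T *m (- (A^T *m G)).
    by rewrite -[Zd^T]mulmx1 -hG mulmxA e1 mulmxN mulNmx mulmxA.
  have e3 : (col_mx Zu Zd)^T = Zu^T *m row_mx 1%:M (- (A^T *m G)).
    by rewrite tr_col_mx mul_mx_row mulmx1 e2.
  rewrite /row_free eqn_leq rank_leq_row /=.
  apply: leq_trans (_ : (\rank (col_mx Zu Zd) <= _)%N); first by rewrite hrk.
  by rewrite col_mxKu -mxrank_tr e3 mxrankM_maxl.
Qed.

Arguments fc_rank {F m n c A} M.
Arguments fc_mul {F m n c A M}.
Arguments fc_inj {F m n c A M1 M2}.
Arguments ssd_ok {F q m p A B Cm c C'}.

Lemma rf1 (F : fieldType) n : row_free (1%:M : 'M[F]_n)^T.
Proof. by rewrite trmx1 row_free_unit unitmx1. Qed.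

Lemma pssd_rank (F : fieldType) Mag Nd (E : rel 'I_Mag) (Nloc : 'I_Mag -> nat)
  (DXl DYl : forall i : 'I_Mag, 'M[F]_(Nloc i, Nd)) C :
  pssd_exec E DXl DYl C -> (forall i, row_free (DXl i)^T /\ row_free (DYl i)^T) ->
  forall k i, row_free (projT2 (C k i))^T.
Proof.
move=> [h0 hstep] hfr; elim=> [|k IH] i.
  by rewrite h0 /= trmx1 row_free_unit unitmx1.
have [d [Dk [e [Ek [[hrD hDle _] hS ->]]]]] := hstep k i.
case: ifP => _ /=; last exact: IH.
have hD : row_free Dk^T by rewrite /row_free mxrank_tr hrD.
have [hX hY] := hfr i.
have [hE _] := ssd_ok hS _ _ (fc_mul hX hD) (fc_mul hY hD) (esym (mulmx1 _)) (esym (mulmx1 _))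
  (rf1 _ _).
exact: fc_mul.
Qed.

Arguments pssd_rank {F Mag Nd E Nloc DXl DYl C}.

Lemma pssd_step (F : fieldType) Mag Nd (E : rel 'I_Mag) (Nloc : 'I_Mag -> nat)
  (DXl DYl : forall i : 'I_Mag, 'M[F]_(Nloc i, Nd)) C :
  pssd_exec E DXl DYl C -> (forall i, row_free (DXl i)^T /\ row_free (DYl i)^T) ->
  forall k i, [/\ range_le (projT2 (C k.+1 i)) (projT2 (C k i)),
     (forall j, E j i -> range_le (projT2 (C k.+1 i)) (projT2 (C k j))) &
     range_eq (DXl i *m projT2 (C k.+1 i)) (DYl i *m projT2 (C k.+1 i))].
Proof.
move=> hex hfr k i.
have hrk := pssd_rank hex hfr.
case: hex => [h0 hstep].
have [d [Dk [e [Ek [[hrD hDle _] hS hC]]]]] := hstep k i.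
have hD : row_free Dk^T by rewrite /row_free mxrank_tr hrD.
have [hX hY] := hfr i.
have [hE heq] := ssd_ok hS _ _ (fc_mul hX hD) (fc_mul hY hD) (esym (mulmx1 _)) (esym (mulmx1 _))
  (rf1 _ _).
have hDE : ((Dk *m Ek)^T <= Dk^T)%MS by rewrite trmx_mul submxMl.
have hN : ((projT2 (C k.+1 i))^T == (Dk *m Ek)^T)%MS.
  rewrite hC; case: ifP => hlt /=; first by rewrite !submx_refl.
  have hle : ((Dk *m Ek)^T <= (projT2 (C k i))^T)%MS.
    apply: submx_trans hDE _; apply: hDle; by rewrite eqxx.
  have := geq_leqif (mxrank_leqif_eq hle).
  have rE : \rank Ek = e by rewrite -mxrank_tr (eqP hE).
  have rC : \rank (projT2 (C k i)) = projT1 (C k i) by rewrite -mxrank_tr (eqP (hrk k i)).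
  rewrite !mxrank_tr fc_rank // rE rC leqNgt hlt /=.
  by move=> /esym h; apply/eqmxP; apply: eqmx_sym; apply/eqmxP.
have hN1 : ((projT2 (C k.+1 i))^T <= Dk^T)%MS.
  by apply: submx_trans hDE; case/andP: hN.
split.
- by apply: submx_trans hN1 _; apply: hDle; rewrite eqxx.
- by move=> j hj; apply: submx_trans hN1 _; apply: hDle; rewrite hj orbT.
- rewrite /range_eq !trmx_mul.
  have /eqmxP hN' := hN.
  apply/eqmxP; apply: eqmx_trans (eqmxMr _ hN') _.
  apply: eqmx_trans _ (eqmx_sym (eqmxMr _ hN')).
  by move: heq; rewrite /range_eq !trmx_mul !mulmxA => /eqmxP.
Qed.

Arguments pssd_step {F Mag Nd E Nloc DXl DYl C}.

Lemma sig_K (F : fieldType) mi Ns Nd c (Ai Bi : 'M[F]_(mi, Nd)) (DXs DYs : 'M_(Ns, Nd))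
  (f : 'I_Ns -> 'I_mi) (M : 'M_(Nd, c)) :
  DXs = rowsub f Ai -> DYs = rowsub f Bi -> range_eq (Ai *m M) (Bi *m M) ->
  exists K, Bi *m M = Ai *m M *m K /\ DYs *m M = DXs *m M *m K.
Proof.
move=> -> -> /andP [_ /submxP [G hG]].
have hK : Bi *m M = Ai *m M *m G^T by rewrite -[Bi *m M]trmxK hG trmx_mul trmxK.
exists G^T; split => //.
by rewrite mul_rowsub_mx hK -mulmxA mul_rowsub_mx mulmxA mul_rowsub_mx.
Qed.

Lemma path_range (F : fieldType) Mag Nd (E : rel 'I_Mag) (C : nat -> 'I_Mag -> {c : nat & 'M[F]_(Nd, c)}) :
  (forall k i j, E j i -> range_le (projT2 (C k.+1 i)) (projT2 (C k j))) ->
  forall p j k, path E j p -> range_le (projT2 (C (k + size p)%N (last j p))) (projT2 (C k j)).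
Proof.
move=> hE; elim=> [|x p IH] j k /=; first by rewrite /range_le addn0 submx_refl.
case/andP=> hjx hp.
apply: submx_trans (hE k x j hjx).
by rewrite addnS -addSn; apply: IH.
Qed.

Lemma mono_range (F : fieldType) Mag Nd (C : nat -> 'I_Mag -> {c : nat & 'M[F]_(Nd, c)}) :
  (forall k i, range_le (projT2 (C k.+1 i)) (projT2 (C k i))) ->
  forall m k i, range_le (projT2 (C (k + m)%N i)) (projT2 (C k i)).
Proof.
move=> h; elim=> [|m IH] k i; first by rewrite /range_le addn0 submx_refl.
by rewrite addnS; apply: submx_trans (h _ _) (IH _ _).
Qed.

Arguments sig_K {F mi Ns Nd c Ai Bi DXs DYs f M}.

Arguments mono_range {F Mag Nd C}.
Arguments path_range {F Mag Nd E C}.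

Lemma rank_rowsub (F : fieldType) m1 m2 n (f : 'I_m2 -> 'I_m1) (A : 'M[F]_(m1, n)) :
  (\rank (rowsub f A) <= \rank A)%N.
Proof.
have -> : rowsub f A = rowsub f 1%:M *m A by rewrite mul_rowsub_mx mul1mx.
exact: mxrankM_maxr.
Qed.

Theorem proposition5p1
  (R : realType) (n N Nd : nat)
  (Mset : 'rV[R]_n -> Prop) (T : 'rV[R]_n -> 'rV[R]_n) (D : 'rV[R]_n -> 'rV[R]_Nd)
  (X Y : 'M[R]_(N, n))
  (hTM : forall x, Mset x -> Mset (T x))
  (hXM : forall r : 'I_N, Mset (row r X))
  (hXY : forall r : 'I_N, row r Y = T (row r X))
  (hrkX : \rank (dict_mat D X) = Nd) (hrkY : \rank (dict_mat D Y) = Nd)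
  (Mag : nat) (Nloc : 'I_Mag -> nat) (sel : forall i : 'I_Mag, 'I_(Nloc i) -> 'I_N)
  (hunion : forall r : 'I_N, exists (i : 'I_Mag) (r' : 'I_(Nloc i)),
      row r' (row_mx (rowsub (sel i) (dict_mat D X)) (rowsub (sel i) (dict_mat D Y)))
      = row r (row_mx (dict_mat D X) (dict_mat D Y)))
  (Ns : nat) (DXs DYs : 'M[R]_(Ns, Nd))
  (hrkXs : \rank DXs = Nd) (hrkYs : \rank DYs = Nd)
  (hsig : forall (i : 'I_Mag) (r : 'I_Ns), exists r' : 'I_(Nloc i),
      row r' (row_mx (rowsub (sel i) (dict_mat D X)) (rowsub (sel i) (dict_mat D Y)))
      = row r (row_mx DXs DYs))
  (E : rel 'I_Mag) (C : nat -> 'I_Mag -> {c : nat & 'M[R]_(Nd, c)})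
  (hexec : pssd_exec E (fun i => rowsub (sel i) (dict_mat D X))
                       (fun i => rowsub (sel i) (dict_mat D Y)) C)
  (l : nat) (j i : 'I_Mag) (p : seq 'I_Mag)
  (hpath : path E j p) (hsize : size p = l) (hlast : last j p = i)
  (k q : nat) (hk : (1 <= k)%N) (hq : (k + l <= q)%N) :
  range_le (projT2 (C q i)) (projT2 (C k j)) /\
  range_eq ((rowsub (sel j) (dict_mat D X)) *m (projT2 (C q i)))
        ((rowsub (sel j) (dict_mat D Y)) *m (projT2 (C q i))).
Proof.
have hsigf : forall i0 : 'I_Mag, exists f : 'I_Ns -> 'I_(Nloc i0),
    DXs = rowsub f (rowsub (sel i0) (dict_mat D X)) /\
    DYs = rowsub f (rowsub (sel i0) (dict_mat D Y)).
  move=> i0; have [f hf] := fin_all_exists (hsig i0); exists f.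
  split; apply/row_matrixP => r; rewrite row_rowsub; move: (hf r);
    rewrite !row_row_mx => /eq_row_mx [h1 h2]; by rewrite ?h1 ?h2.
have hDXs : row_free DXs^T by rewrite /row_free mxrank_tr hrkXs.
have hfr : forall i0, row_free (rowsub (sel i0) (dict_mat D X))^T /\
                      row_free (rowsub (sel i0) (dict_mat D Y))^T.
  move=> i0; have [f [hXs hYs]] := hsigf i0.
  split; rewrite /row_free mxrank_tr eqn_leq rank_leq_col /=.
    apply: leq_trans (_ : (\rank DXs <= _)%N); first by rewrite hrkXs.
    by rewrite hXs rank_rowsub.
  apply: leq_trans (_ : (\rank DYs <= _)%N); first by rewrite hrkYs.
  by rewrite hYs rank_rowsub.
have hstepP := pssd_step hexec hfr.
have hrk := pssd_rank hexec hfr.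
have part1 : range_le (projT2 (C q i)) (projT2 (C k j)).
  have -> : q = ((k + l) + (q - (k + l)))%N by rewrite subnKC.
  apply: submx_trans (mono_range _ _ _ _) _.
    by move=> k0 i0; case: (hstepP k0 i0).
  have := path_range (fun k0 i0 j0 h => let: And3 _ h2 _ := hstepP k0 i0 in h2 j0 h) p j k hpath.
  by rewrite hsize hlast.
split => //.
have hi : range_eq (rowsub (sel i) (dict_mat D X) *m projT2 (C q i))
                   (rowsub (sel i) (dict_mat D Y) *m projT2 (C q i)).
  have [_ _ h] := hstepP q.-1 i; rewrite prednK in h => //; lia.
have hj : range_eq (rowsub (sel j) (dict_mat D X) *m projT2 (C k j))
                   (rowsub (sel j) (dict_mat D Y) *m projT2 (C k j)).
  have [_ _ h] := hstepP k.-1 j; rewrite prednK in h => //; lia.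
have [fi [hXi hYi]] := hsigf i.
have [fj [hXj hYj]] := hsigf j.
have [Ki [_ hKi]] := sig_K hXi hYi hi.
have [Kj [hBj hKj]] := sig_K hXj hYj hj.
have [G0 hG] := submxP part1.
have hMW : projT2 (C q i) = projT2 (C k j) *m G0^T by rewrite -[LHS]trmxK hG trmx_mul trmxK.
have hcomm : Kj *m G0^T = G0^T *m Ki.
  apply: (fc_inj (fc_mul hDXs (hrk k j))).
  by rewrite [LHS]mulmxA -hKj -[LHS]mulmxA -hMW hKi hMW !mulmxA.
have [hXj' hYj'] := hfr j.
have eB : rowsub (sel j) (dict_mat D Y) *m projT2 (C q i)
          = rowsub (sel j) (dict_mat D X) *m projT2 (C q i) *m Ki.
  by rewrite hMW mulmxA hBj -!mulmxA hcomm.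
have sub : ((rowsub (sel j) (dict_mat D Y) *m projT2 (C q i))^T <=
            (rowsub (sel j) (dict_mat D X) *m projT2 (C q i))^T)%MS.
  by rewrite eB trmx_mul submxMl.
rewrite /range_eq; apply/eqmxP; apply: eqmx_sym; apply/eqmxP.
by rewrite -(geq_leqif (mxrank_leqif_eq sub)) !mxrank_tr !fc_rank.
Qed.
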